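(* Let $X$ be a real Banach space and $C$ a weakly compact subset of $X$. Then the triplet $(X,C,\mathcal{CB}(X))$ has weak-$\mathscr{F}_{cmc}$-SACP, where $\mathcal{CB}(X)$ is the family of all nonempty closed bounded subsets of $X$ and $\mathscr{F}_{cmc}$ is the class of all convex, monotone, coercive functions $f:\ell_\infty^+(F)\to[0,\infty)$, $F\in\mathcal{CB}(X)$.
   Context: For a nonempty closed bounded set $F\subseteq X$, $\ell_\infty^+(F)$ is the set of bounded functions $\varphi:F\to[0,\infty)$ with the coordinatewise order and sup norm. $f$ is monotone if $\varphi_1\le\varphi_2$ implies $f(\varphi_1)\le f(\varphi_2)$, coercive if $f(\varphi)\to\infty$ as $\|\varphi\|_\infty\to\infty$. $r_f(x,F)=f((\|x-a\|)_{a\in F})$, $\mathrm{rad}_V^f(F)=\inf_{v\in V}r_f(v,F)$. $(X,V,\mathfrak{F})$ has weak-$\mathscr{F}$-SACP if for every $F\in\mathfrak{F}$, every $f\in\mathscr{F}$ on $\ell_\infty^+(F)$ and every sequence $(v_n)\subseteq V$ with $r_f(v_n,F)\to\mathrm{rad}_V^f(F)$, $(v_n)$ has a weakly convergent subsequence. *)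

(* Defs.v *)
From HB Require Import structures.
From mathcomp Require Import all_boot all_order all_algebra.
From mathcomp Require Import all_classical all_reals all_analysis.
Set Implicit Arguments. Unset Strict Implicit. Unset Printing Implicit Defensive.
Import Order.TTheory GRing.Theory Num.Theory.
Import numFieldNormedType.Exports.
Local Open Scope classical_set_scope.
Local Open Scope ring_scope.

Section Defs.
Context {R : realType} {X : normedModType R}.

Definition dual_index : Type :=
  {l : X -> R | (forall (a : R) (x y : X), l (a *: x + y) = a * l x + l y)
                /\ continuous l}.

(** The weak topology sigma(X, X^star): initial topology of x |-> (l |-> l x),
    the codomain carrying the product (pointwise) topology. *)
Definition weak_eval (x : X) : prod_topology (fun _ : dual_index => (R : topologicalType)) := fun l => sval l x.
Local Notation weakX := (initial_topology weak_eval).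

Definition weakly_compact (C : set X) : Prop := @compact weakX C.

Definition weak_cvg (u : nat -> X) (x : X) : Prop :=
  ((u : nat -> weakX) @ \oo --> (x : weakX)).

Definition linfty_pos (F : set X) (phi : {a : X | F a} -> R) : Prop :=
  (forall a, 0 <= phi a) /\ (exists M : R, forall a, phi a <= M).

Definition supnorm (F : set X) (phi : {a : X | F a} -> R) : R :=
  sup (range (fun a => `|phi a|)).

(** the class F_cmc on l_oo^+(F): functions l_oo^+(F) -> [0,oo) that are
    convex, monotone and coercive (values outside l_oo^+(F) are irrelevant) *)
Definition F_cmc (F : set X) (f : ({a : X | F a} -> R) -> R) : Prop :=
  [/\ (forall phi, linfty_pos phi -> 0 <= f phi),
      (forall phi1 phi2 (t : R), linfty_pos phi1 -> linfty_pos phi2 ->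
         0 <= t -> t <= 1 ->
         f (fun a => t * phi1 a + (1 - t) * phi2 a) <= t * f phi1 + (1 - t) * f phi2),
      (forall phi1 phi2, linfty_pos phi1 -> linfty_pos phi2 ->
         (forall a, phi1 a <= phi2 a) -> f phi1 <= f phi2) &
      (forall M : R, exists K : R, forall phi, linfty_pos phi ->
         K <= supnorm phi -> M <= f phi)].

Definition r_f (F : set X) (f : ({a : X | F a} -> R) -> R) (x : X) : R :=
  f (fun a => `|x - sval a|).

Definition rad_f (V : set X) (F : set X) (f : ({a : X | F a} -> R) -> R) : R :=
  inf [set r_f f v | v in V].

Definition CB : set (set X) :=
  [set F | F !=set0 /\ closed F /\ bounded_set F].

Definition weak_SACP (V : set X) (Fam : set (set X))
  (Cls : forall F : set X, (({a : X | F a} -> R) -> R) -> Prop) : Prop :=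
  forall F : set X, Fam F ->
  forall f : ({a : X | F a} -> R) -> R, Cls F f ->
  forall v : nat -> X, (forall n, V (v n)) ->
    (fun n => r_f f (v n)) @ \oo --> rad_f V f ->
    exists (s : nat -> nat) (x : X),
      {homo s : m n / (m < n)%N >-> (m < n)%N} /\ weak_cvg (v \o s) x.

End Defs.

(* Main.v *)
Require Import Defs.
From HB Require Import structures.
From mathcomp Require Import all_boot all_order all_algebra.
From mathcomp Require Import all_classical all_reals all_analysis.
From mathcomp Require Import ring lra.
Set Implicit Arguments. Unset Strict Implicit. Unset Printing Implicit Defensive.
Import Order.TTheory GRing.Theory Num.Theory.
Import numFieldNormedType.Exports.
Local Open Scope classical_set_scope.
Local Open Scope ring_scope.

Lemma cvg_sub2 (R : realType) (T : Type) (F : set_system T) {FF : Filter F}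
  (f1 f2 : T -> R) b1 b2 :
  f1 @ F --> b1 -> f2 @ F --> b2 -> (fun t => f1 t - f2 t) @ F --> b1 - b2.
Proof. by move=> h1 h2; apply: cvgB. Qed.

Lemma cvg_comb (R : realType) (T : Type) (F : set_system T) {FF : Filter F}
  (f1 f2 f3 : T -> R) a b1 b2 b3 :
  f1 @ F --> b1 -> f2 @ F --> b2 -> f3 @ F --> b3 ->
  (fun t => f1 t - (a * f2 t + f3 t)) @ F --> b1 - (a * b2 + b3).
Proof.
move=> h1 h2 h3; apply: cvg_sub2 => //; apply: cvgD => //.
by apply: cvgM => //; exact: cvg_cst.
Qed.

Lemma cluster_closed (T U : topologicalType) (F : set_system T) (phi : T -> U) (S : set U) (z : T) :
  cluster F z -> {for z, continuous phi} -> closed S -> F (phi @^-1` S) -> S (phi z).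
Proof.
move=> cz cphi cS FS; apply: contrapT => nS.
have : nbhs (phi z) (~` S) by apply: open_nbhs_nbhs; split => //; exact: closed_openC.
move=> /cphi nb; have [t [St nSt]] := cz _ _ FS nb; exact: nSt St.
Qed.

Lemma initial_cvg (S : choiceType) (T : topologicalType) (f : S -> T) (F : set_system S) (x : S) :
  Filter F -> f @ F --> f x -> F --> (x : initial_topology f).
Proof.
move=> FF Ff A; rewrite nbhsE => -[B [oB Bx] BA].
case: oB => C oC CB.
have : nbhs (f x) C by apply: open_nbhs_nbhs; split => //; rewrite -CB in Bx.
move=> /Ff FC; apply: filterS BA _; rewrite -CB; exact: FC.
Qed.

Lemma prod_cvg (I : Type) (K : I -> topologicalType) (F : set_system (prod_topology K)) (f : prod_topology K) :
  Filter F -> (forall i, (fun g => g i) @ F --> f i) -> F --> f.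
Proof.
move=> FF H; apply/cvg_sup => i; apply: initial_cvg; exact: H.
Qed.

Lemma eval_cont (I : Type) (K : I -> topologicalType) (i : I) :
  continuous (fun g : prod_topology K => g i).
Proof.
move=> f; have /cvg_sup/(_ i) h : (nbhs f) --> (f : prod_topology K) by [].
apply: cvg_trans; last exact: (@initial_continuous _ _ (fun g : prod_topology K => g i) f).
exact: cvg_app h.
Qed.

Lemma cluster_subseq (R : realType) (M : pseudoMetricType R) (u : nat -> M) (a : M) :
  cluster (u @ \oo) a ->
  exists f : nat -> nat, (forall n, f n < f n.+1)%N /\ u \o f @ \oo --> a.
Proof.
move=> cl.
have H (k N : nat) : exists n, (N < n)%N /\ ball a k.+1%:R^-1 (u n).
  have uN : (u @ \oo) (u @` [set n | (N < n)%N]).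
    by exists N.+1 => // n /= Nn; exists n.
  have nb : nbhs a (ball a k.+1%:R^-1) by apply: nbhsx_ballx; rewrite invr_gt0 ltr0Sn.
  have [_ [[n Nn <-] bn]] := cl _ _ uN nb.
  by exists n.
pose g k N := sval (cid (H k N)).
have gP k N : (N < g k N)%N /\ ball a k.+1%:R^-1 (u (g k N)) by rewrite /g; case: cid.
pose f := fix f k := if k is k'.+1 then g k (f k') else g 0%N 0%N.
have fball k : ball a k.+1%:R^-1 (u (f k)) by case: k => [|k]; exact: (gP _ _).2.
exists f; split; first by move=> n; exact: (gP _ _).1.
apply/cvg_ballP => e e0.
have := near_infty_natSinv_lt (PosNum e0) => -[N _ HN].
exists N => // k /= Nk; apply: le_ball (fball k).
by apply/ltW/(HN k).
Qed.

Lemma cluster_map (T U : topologicalType) (F : set_system T) (phi : T -> U) z :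
  cluster F z -> {for z, continuous phi} -> cluster (phi @ F) (phi z).
Proof.
move=> cz cphi A B FA nB; have [t [At Bt]] := cz _ _ FA (cphi _ nB).
by exists (phi t).
Qed.

Lemma cluster_lim (R : realType) (T : topologicalType) (I : Type) (F : set_system I)
  (u : I -> T) z (phi : T -> R) c :
  cluster (u @ F) z -> {for z, continuous phi} -> (phi \o u) @ F --> c -> phi z = c.
Proof.
move=> cz cphi Hc; have := cluster_map cz cphi => /(cvg_cluster Hc) h.
by apply/esym/Rhausdorff.
Qed.


Section W.
Context (R : realType) (X : normedModType R).
Local Notation D := (@dual_index R X).
Local Notation WX := (initial_topology (@weak_eval R X)).

Lemma weak_cont (l : D) : continuous (fun x : WX => sval l x).
Proof.
move=> x; apply: (@cvg_trans _ _ ((fun g => g l) @ (@weak_eval R X @ x))).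
  exact: cvg_app (@initial_continuous _ _ (@weak_eval R X) x).
exact: (@eval_cont D (fun _ => R) l).
Qed.

Lemma weak_cvgP (u : nat -> X) (x : X) :
  (forall l : D, (fun n => sval l (u n)) @ \oo --> sval l x) -> weak_cvg u x.
Proof.
move=> H; rewrite /weak_cvg; apply: initial_cvg.
apply: prod_cvg => l; exact: H.
Qed.

Lemma lin0 (l : D) : sval l 0 = 0.
Proof.
case: l => l [ll _] /=; have := ll 1 0 0; rewrite scale1r addr0 mul1r.
by move=> h; apply: (@addrI _ (l 0)); rewrite addr0 -h.
Qed.

Lemma linZ (l : D) a x : sval l (a *: x) = a * sval l x.
Proof. by have := (proj2_sig l).1 a x 0; rewrite addr0 lin0 addr0. Qed.

Lemma linD (l : D) x y : sval l (x + y) = sval l x + sval l y.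
Proof. by have := (proj2_sig l).1 1 x y; rewrite scale1r mul1r. Qed.

Lemma linB (l : D) x y : sval l (x - y) = sval l x - sval l y.
Proof. by rewrite linD -scaleN1r linZ mulN1r. Qed.

Lemma lin_bound (l : D) : exists c : nat, forall x, `|sval l x| <= c%:R * `|x|.
Proof.
have := (proj2_sig l).2 0 => /cvgrPdist_lt /(_ 1 ltr01); rewrite lin0.
rewrite /= => /nbhs_ballP [d d0 Hd].
exists (Num.bound (2 / d)) => x.
have [->|x0] := eqVneq x 0; first by rewrite lin0 !normr0 mulr0.
have nx0 : 0 < `|x| by rewrite normr_gt0.
pose t := d / (2 * `|x|).
have t0 : 0 < t by rewrite divr_gt0 // mulr_gt0.
have : `|0 - sval l (t *: x)| < 1.
  apply: Hd; rewrite -ball_normE /= sub0r normrN normrZ gtr0_norm // /t.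
  have -> : d / (2 * `|x|) * `|x| = d / 2 by field; rewrite gt_eqF.
  by rewrite ltr_pdivrMr // ltr_pMr // ltr1n.
rewrite sub0r normrN linZ normrM gtr0_norm // => H.
have H1 : `|sval l x| < 1 / t by rewrite ltr_pdivlMr // mulrC.
have e : 1 / t = 2 / d * `|x| by rewrite /t; field; rewrite !gt_eqF.
apply: (le_trans (ltW H1)); rewrite e ler_wpM2r //.
apply/ltW/archi_boundP; rewrite divr_ge0 //; exact: ltW.
Qed.

Definition Bc (c : nat) (l : D) := forall x, `|sval l x| <= c%:R * `|x|.

Definition zeroD : D.
Proof.
exists (fun _ => 0); split; first by move=> *; rewrite mulr0 addr0.
exact: cst_continuous.
Defined.

Lemma Bc_zero c : Bc c zeroD.
Proof. by move=> x /=; rewrite normr0 mulr_ge0. Qed.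

Section ES.
Variable v : nat -> X.

Definition keyP (i : nat * nat * nat * seq int) (l : D) :=
  let: (c, N, m, q) := i in
  Bc c l /\ [seq Num.floor (m.+1%:R * sval l (v n)) | n <- iota 0 N.+1] = q.

Definition pickD i : D :=
  match pselect (exists l, keyP i l) with
  | left h => sval (cid h)
  | right _ => zeroD
  end.

Definition ee (k : nat) : D :=
  match unpickle k with Some i => pickD i | None => zeroD end.

Lemma floor_close (a b : R) : Num.floor a = Num.floor b -> `|a - b| < 1.
Proof.
move=> h; have a1 := floor_le a; have a2 := floorD1_gt a.
have b1 := floor_le b; have b2 := floorD1_gt b.
rewrite h in a1 a2; rewrite intrD in a2 b2.
rewrite ltr_norml; apply/andP; split; lra.
Qed.

Lemma ee_dense c N m (l : D) : Bc c l ->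
  exists k, Bc c (ee k) /\
    forall n, (n <= N)%N -> `|sval (ee k) (v n) - sval l (v n)| < m.+1%:R^-1.
Proof.
move=> Bl.
pose i := (c, N, m, [seq Num.floor (m.+1%:R * sval l (v n)) | n <- iota 0 N.+1]).
have ex : exists l, keyP i l by exists l.
exists (pickle i); rewrite /ee pickleK /pickD.
case: pselect => [h|//]; case: cid => l' [Bl' Hq] /=.
split => // n nN.
have : n \in iota 0 N.+1 by rewrite mem_iota add0n ltnS.
move: Hq => /esym/eq_in_map /[apply] /= /floor_close.
rewrite -mulrBr normrM gtr0_norm ?ltr0Sn // => H.
by rewrite distrC -(ltr_pM2l (ltr0Sn R m)) mulfV ?gt_eqF ?ltr0Sn.
Qed.


Definition Qp (y : X) := forall h1 h2 : D,
  (forall n, sval h1 (v n) = sval h2 (v n)) -> sval h1 y = sval h2 y.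

Local Notation Pt := (prod_topology (fun _ : X => R)).

Lemma claimA c (l : D) y e : Qp y -> Bc c l -> 0 < e ->
  exists N, forall l' : D, Bc c l' ->
   (forall n, (n <= N)%N -> `|sval l' (v n) - sval l (v n)| < N.+1%:R^-1) ->
   `|sval l' y - sval l y| < e.
Proof.
move=> Qy Bl e0; apply: contrapT => /forallNP H.
have H' N : exists l', [/\ Bc c l',
    (forall n, (n <= N)%N -> `|sval l' (v n) - sval l (v n)| < N.+1%:R^-1) &
    e <= `|sval l' y - sval l y|].
  have /existsNP [l' /not_implyP [Bl' /not_implyP [Hn /negP]]] := H N.
  by rewrite -leNgt => ?; exists l'.
pose L N := sval (cid (H' N)).
have LP N : [/\ Bc c (L N),
    (forall n, (n <= N)%N -> `|sval (L N) (v n) - sval l (v n)| < N.+1%:R^-1) &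
    e <= `|sval (L N) y - sval l y|] by rewrite /L; case: cid.
pose gs : nat -> Pt := fun N => sval (L N).
pose K : set Pt := [set g | forall x, `[- (c%:R * `|x|), c%:R * `|x|]%classic (g x)].
have Kc : compact K.
  have := @tychonoff X (fun _ => R) (fun x => `[- (c%:R * `|x|), c%:R * `|x|]%classic)
    (fun x => @segment_compact R _ _).
  exact.
have KF : (gs @ \oo) K.
  exists 0%N; first by [].
  move=> N _ x; have [B _ _] := LP N.
  have := B x; rewrite ler_norml => h.
  by rewrite /= in_itv /=.
have [g [Kg cg]] := Kc (gs @ \oo) _ KF.
have lin a x z : g (a *: x + z) = a * g x + g z.
  apply/eqP; rewrite -subr_eq0; apply/eqP.
  apply: (@cluster_lim R Pt nat \oo gs g (fun t : Pt => t (a *: x + z) - (a * t x + t z)) 0 cg).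
    exact: (cvg_comb (a:=a) (@eval_cont X (fun _ => R) (a *: x + z) g) (@eval_cont X (fun _ => R) x g)
      (@eval_cont X (fun _ => R) z g)).
  have -> : (fun t : Pt => t (a *: x + z) - (a * t x + t z)) \o gs = fun _ => 0.
    apply/funext => N; rewrite /gs /= ((proj2_sig (L N)).1 a x z).
    by rewrite subrr.
  exact: cvg_cst.
have gv n : g (v n) = sval l (v n).
  apply: (@cluster_lim R Pt nat \oo gs g (fun t : Pt => t (v n)) (sval l (v n)) cg
    (@eval_cont X (fun _ => R) (v n) g)).
  apply/cvgrPdist_lt => eps eps0.
  have [M _ HM] := near_infty_natSinv_lt (PosNum eps0).
  exists (maxn n M) => // N /= hN.
  have [_ HN _] := LP N; rewrite distrC.
  apply: lt_trans (HN n _) _; first by apply: leq_trans hN; exact: leq_maxl.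
  by apply: HM; apply: leq_trans hN; exact: leq_maxr.
have gy : e <= `|g y - sval l y|.
  have := @cluster_closed _ _ _ (fun t : Pt => t y) (~` ball (sval l y) e) g cg (@eval_cont X (fun _ => R) y g).
  rewrite closedC => /(_ (ball_open _ _)) HH.
  have : (~` ball (sval l y) e) (g y).
    apply: HH; exists 0%N => // N _ /=; have [_ _ h] := LP N.
    by rewrite /ball /= distrC => hb; rewrite leNgt hb in h.
  by rewrite /ball /= distrC => nb; rewrite leNgt; apply/negP.
have gb x : `|g x| <= c%:R * `|x|.
  by have := Kg x; rewrite /= in_itv /= -ler_norml.
have gc : continuous g.
  move=> x; apply/cvgrPdist_lt => eps eps0.
  apply/nbhs_ballP; exists (eps / (c%:R + 1)) => /=.
    by rewrite divr_gt0 // ltr_wpDl.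
  move=> z; rewrite -ball_normE /= => hz.
  have lB : g x - g z = g (x - z).
    have := lin (-1) z x; rewrite scaleN1r mulN1r addrC => ->.
    by rewrite addrC.
  rewrite lB; apply: le_lt_trans (gb _) _.
  rewrite ltr_pdivlMr ?ltr_wpDl // mulrC in hz.
  apply: le_lt_trans hz; rewrite ler_wpM2r //; lra.
pose gD : D := exist _ (g : X -> R) (conj lin gc).
have := Qy gD l gv; rewrite /= => gyl.
by move: gy; rewrite gyl subrr normr0 leNgt e0.
Qed.


Lemma Q_of_cluster (I : Type) (F : set_system I) {FF : Filter F} (t : I -> nat) (y : X) :
  cluster (((v \o t) : I -> WX) @ F) y -> Qp y.
Proof.
move=> cy h1 h2 H; apply/eqP; rewrite -subr_eq0; apply/eqP.
apply: (@cluster_lim R WX I F (v \o t) y (fun x : WX => sval h1 x - sval h2 x) 0 cy).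
  exact: (cvg_sub2 (@weak_cont h1 y) (@weak_cont h2 y)).
have -> : (fun x : WX => sval h1 x - sval h2 x) \o (v \o t) = fun _ => 0.
  by apply/funext => i; rewrite /= H subrr.
exact: cvg_cst.
Qed.

Local Notation Pn := (prod_topology (fun _ : nat => R)).

Lemma ES (C : set X) : weakly_compact C -> (forall n, C (v n)) ->
  exists s : nat -> nat, (forall n, (s n < s n.+1)%N) /\ exists x, weak_cvg (v \o s) x.
Proof.
move=> Cc vC.
pose Phi : WX -> Pn := fun x k => sval (ee k) x.
have Phic : continuous Phi.
  move=> x; apply: (@prod_cvg nat (fun _ => R) (Phi @ x) (Phi x)).
    apply: fmap_filter; exact: (@nbhs_filter WX x).
  move=> k; exact: (@weak_cont (ee k) x).
have vF : ((v : nat -> WX) @ \oo) C by exists 0%N => // n _; exact: vC.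
have [y [Cy cy]] := Cc _ _ vF.
have cPy : cluster ((Phi \o v) @ \oo) (Phi y) := cluster_map cy (Phic y).
have [s [sinc sP]] := cluster_subseq cPy.
have ek k : (fun j => sval (ee k) (v (s j))) @ \oo --> sval (ee k) y.
  have h1 := @eval_cont nat (fun _ => R) k (Phi y).
  exact: (cvg_trans (cvg_app (fun g : Pn => g k) sP) h1).
exists s; split => //.
pose w := v \o s.
have wF : ((w : nat -> WX) @ \oo) C by exists 0%N => // n _; exact: vC.
have [x [Cx cx]] := Cc _ _ wF.
exists x; apply: weak_cvgP => l.
apply: contrapT => Hn.
have [e [e0 He]] : exists e : R, 0 < e /\
    forall N, exists j, (N <= j)%N /\ e <= `|sval l x - sval l (w j)|.
  move: Hn; rewrite cvgrPdist_lt => /existsNP [e /not_implyP [e0 nP]].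
  exists e; split => // N; apply: contrapT => hN; apply: nP; exists N => // j /= Nj.
  rewrite ltNge; apply/negP => hj; apply: hN; exists j; split => //.
pose B N := [set j | (N <= j)%N /\ e <= `|sval l x - sval l (w j)|].
pose G := filter_from setT B.
have GF : ProperFilter G.
  apply: filter_from_proper; last by move=> N _; have [j hj] := He N; exists j.
  apply: filter_from_filter; first by exists 0%N.
  move=> i j _ _; exists (maxn i j) => // k [hk hk']; split; split => //.
    by apply: leq_trans hk; exact: leq_maxl.
  by apply: leq_trans hk; exact: leq_maxr.
have Goo : G --> \oo.
  by move=> A [N _ HA]; exists N => // j [Nj _]; exact: HA.
have wG : ((w : nat -> WX) @ G) C by exists 0%N => // j _; exact: vC.
have [z [Cz cz]] := Cc _ _ wG.
have Qx : Qp x by apply: (Q_of_cluster cx).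
have Qz : Qp z by apply: (Q_of_cluster cz).
have exz k : sval (ee k) x = sval (ee k) z.
  rewrite (@cluster_lim R WX nat \oo w x (fun t : WX => sval (ee k) t) (sval (ee k) y) cx
     (@weak_cont (ee k) x) (ek k)).
  rewrite (@cluster_lim R WX nat G w z (fun t : WX => sval (ee k) t) (sval (ee k) y) cz
     (@weak_cont (ee k) z) (cvg_trans (cvg_app _ Goo) (ek k))) //.
have lxz : e <= `|sval l x - sval l z|.
  have := @cluster_closed _ _ _ (fun t : WX => sval l t) (~` ball (sval l x) e) z cz (@weak_cont l z).
  rewrite closedC => /(_ (ball_open _ _)) HH.
  have : (~` ball (sval l x) e) (sval l z).
    by apply: HH; exists 0%N => // j [_ h] /=; rewrite /ball /= => hb; rewrite leNgt hb in h.
  by rewrite /ball /= => nb; rewrite leNgt; apply/negP.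
have [c Bl] := lin_bound l.
have e2 : 0 < e / 2 by rewrite divr_gt0.
have [N1 H1] := claimA Qx Bl e2.
have [N2 H2] := claimA Qz Bl e2.
have [k [Bk Hk]] := ee_dense (maxn N1 N2) (maxn N1 N2) Bl.
have hx : `|sval (ee k) x - sval l x| < e / 2.
  apply: H1 => // n nN; apply: lt_le_trans (Hk n _) _.
    by apply: leq_trans nN _; exact: leq_maxl.
  by rewrite lef_pV2 ?posrE ?ltr0Sn // ler_nat ltnS leq_maxl.
have hz : `|sval (ee k) z - sval l z| < e / 2.
  apply: H2 => // n nN; apply: lt_le_trans (Hk n _) _.
    by apply: leq_trans nN _; exact: leq_maxr.
  by rewrite lef_pV2 ?posrE ?ltr0Sn // ler_nat ltnS leq_maxr.
have : `|sval l x - sval l z| <= `|sval (ee k) x - sval l x| + `|sval (ee k) z - sval l z|.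
  have -> : sval l x - sval l z = (sval l x - sval (ee k) z) + (sval (ee k) z - sval l z).
    by rewrite addrA subrK.
  by apply: le_trans (ler_normD _ _) _; rewrite distrC exz.
lra.
Qed.

End ES.
End W.

Unset Implicit Arguments.

Theorem corollary2p4 (R : realType) (X : completeNormedModType R) (C : set X) :
  weakly_compact C -> weak_SACP C CB (@F_cmc R X).
Proof.
move=> Cc F _ f _ v vC _.
have [s [sinc [x hx]]] := ES Cc vC.
exists s, x; split => //.
exact: homo_ltn (fun y x z => @ltn_trans y x z) sinc.
Qed.
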